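(* Let $S\subseteq\mathbb{R}^n$ be a closed set and $C\subseteq\mathbb{R}^n$ a convex $S$-free set. Assume $C=\{x\in\mathbb{R}^n : \alpha^\mathsf{T} x\le\beta\ \forall(\alpha,\beta)\in\Gamma\}$ for some family $\Gamma$ of inequalities, and that for every $(\alpha,\beta)\in\Gamma$ there is a point $x\in S\cap C$ that exposes $(\alpha,\beta)$ with respect to $C$. Then $C$ is maximal $S$-free.
   Context: A convex set $C$ is $S$-free if $\operatorname{int}(C)\cap S=\emptyset$, and maximal $S$-free if it is $S$-free and no $S$-free convex set strictly contains it. An inequality $\alpha^\mathsf{T} x\le\beta$ (written $(\alpha,\beta)$) is valid for $C$ if it holds on $C$; it is non-trivial if $\alpha\neq0$. A point $x_0$ exposes a valid inequality $(\alpha,\beta)$ with respect to convex $C$ if $\alpha^\mathsf{T} x_0=\beta$ and for every non-trivial valid inequality $\gamma^\mathsf{T} x\le\delta$ for $C$ with $\gamma^\mathsf{T} x_0=\delta$ there is $\mu>0$ with $\gamma=\mu\alpha$ and $\delta=\mu\beta$. *)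

(* Defs.v *)
(* R^n is modelled as row vectors 'rV[R]_n
   over a realType R, with their canonical (normed) topology. *)
From HB Require Import structures.
From mathcomp Require Import all_boot all_order all_algebra.
From mathcomp Require Import all_classical all_reals all_analysis.
Set Implicit Arguments. Unset Strict Implicit. Unset Printing Implicit Defensive.
Import Order.TTheory GRing.Theory Num.Theory.
Import numFieldNormedType.Exports.
Local Open Scope classical_set_scope.
Local Open Scope ring_scope.

Section Defs.
Variables (R : realType) (n : nat).
Notation V := 'rV[R]_n.

Definition dotp (u v : V) : R := \sum_(i < n) u ord0 i * v ord0 i.

Definition convexR (C : set V) : Prop := convex_set (C : set (convex_lmodType V)).

Definition S_free (S C : set V) : Prop :=
  convexR C /\ interior C `&` S = set0.

Definition maximal_S_free (S C : set V) : Prop :=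
  S_free S C /\ forall D : set V, S_free S D -> C `<=` D -> D = C.

Definition valid_ineq (C : set V) (ab : V * R) : Prop :=
  forall x, C x -> dotp ab.1 x <= ab.2.

Definition exposes (C : set V) (x0 : V) (ab : V * R) : Prop :=
  valid_ineq C ab /\ dotp ab.1 x0 = ab.2 /\
  forall gd : V * R, gd.1 != 0 -> valid_ineq C gd -> dotp gd.1 x0 = gd.2 ->
    exists2 mu : R, 0 < mu & gd.1 = mu *: ab.1 /\ gd.2 = mu * ab.2.

End Defs.

(* Main.v *)
Require Import Defs.
From HB Require Import structures.
From mathcomp Require Import all_boot all_order all_algebra.
From mathcomp Require Import all_classical all_reals all_analysis.
From mathcomp Require Import ring lra.
Import Order.TTheory GRing.Theory Num.Theory.
Import numFieldNormedType.Exports.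
Local Open Scope classical_set_scope.
Local Open Scope ring_scope.
Set Implicit Arguments. Unset Strict Implicit.

Lemma convexRP (R : realType) (n : nat) (D : set 'rV[R]_n) :
  convexR D -> forall a b (l : R), D a -> D b -> 0 <= l -> l <= 1 ->
  D (l *: a + (1 - l) *: b).
Proof.
move=> cD a b l Da Db l0 l1.
have := cD a b (Itv01 l0 l1) (mem_set Da) (mem_set Db).
by rewrite inE.
Qed.

Section S.
Variables (R : realType) (n : nat).
Local Notation V := 'rV[R]_n.

Definition cvx (E : set V) := forall a b (l : R), E a -> E b -> 0 <= l -> l <= 1 ->
  E (l *: a + (1 - l) *: b).
Definition sgv (f : {ffun 'I_n -> bool}) : V := \row_i (if f i then 1 else -1).

Lemma conv_abs (l u v : R) : 0 <= l -> l <= 1 -> `|u| <= 2^-1 -> `|v| <= 2^-1 ->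
  `|l * u + (1 - l) * v| <= 2^-1.
Proof.
move=> l0 l1 hu hv.
apply: (le_trans (ler_normD _ _)).
rewrite !normrM (ger0_norm l0) (ger0_norm (_ : 0 <= 1 - l)); last by rewrite subr_ge0.
have -> : (2^-1 : R) = l * 2^-1 + (1 - l) * 2^-1 by ring.
apply: lerD; apply: ler_wpM2l => //; by rewrite subr_ge0.
Qed.

Lemma signA (k : nat) : forall E, cvx E ->
  (forall f, exists p, E p /\ forall i : 'I_n, (i < k)%N -> `|p ord0 i - sgv f ord0 i| <= 2^-1) ->
  exists p, E p /\ forall i : 'I_n, (i < k)%N -> p ord0 i = 0.
Proof.
elim: k => [|k IH] E cE H.
  by have [p [Ep _]] := H [ffun => true]; exists p.
case: (ltnP k n) => kn; last first.
  have [|p [Ep Hp]] := IH E cE.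
    move=> f; have [p [Ep Hp]] := H f; exists p; split => // i ik.
    by apply: Hp; apply: ltnW.
  exists p; split => // i _; apply: Hp; exact: (leq_trans (ltn_ord i) kn).
pose ik := Ordinal kn.
pose E' := [set p : V | E p /\ p ord0 ik = 0].
have cE' : cvx E'.
  move=> a b l [Ea a0] [Eb b0] l0 l1; split; first exact: cE.
  by rewrite !mxE a0 b0 !mulr0 addr0.
have H' : forall f, exists p, E' p /\ forall i : 'I_n, (i < k)%N ->
    `|p ord0 i - sgv f ord0 i| <= 2^-1.
  move=> f.
  pose fp := [ffun i => if i == ik then true else f i].
  pose fm := [ffun i => if i == ik then false else f i].
  have [pp [Epp Hp]] := H fp; have [pm [Epm Hm]] := H fm.
  have ha : 2^-1 <= pp ord0 ik.
    have := Hp ik (ltnSn k); rewrite !mxE !ffunE eqxx => /ler_normlP [h1 h2].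
    lra.
  have hb : pm ord0 ik <= - 2^-1.
    have := Hm ik (ltnSn k); rewrite !mxE !ffunE eqxx => /ler_normlP [h1 h2].
    lra.
  set a := pp ord0 ik in ha *; set b := pm ord0 ik in hb *.
  have h2 : (0 : R) < 2^-1 by rewrite invr_gt0 ltr0n.
  have abp : 0 < a - b by rewrite subr_gt0; apply: (le_lt_trans hb); apply: (lt_le_trans _ ha); rewrite (lt_trans _ h2) // oppr_lt0.
  pose l := - b / (a - b).
  have l0 : 0 <= l by rewrite divr_ge0 ?(ltW abp) // oppr_ge0 (le_trans hb) // oppr_le0 ltW.
  have l1 : l <= 1 by rewrite ler_pdivrMr // mul1r lerBrDr addrC subrr (le_trans _ ha) // ltW.
  exists (l *: pp + (1 - l) *: pm); split.
    split; first exact: cE.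
    rewrite !mxE -/a -/b /l; field; by rewrite lt0r_neq0.
  move=> i ilt.
  have ine : i != ik by apply/eqP => /(congr1 val) /= eik; move: ilt; rewrite eik ltnn.
  have := Hp i (ltnW ilt); have := Hm i (ltnW ilt).
  rewrite !mxE !ffunE (negbTE ine) => hm hp.
  have -> : l * pp ord0 i + (1 - l) * pm ord0 i - (if f i then 1 else -1) =
    l * (pp ord0 i - (if f i then 1 else -1)) + (1 - l) * (pm ord0 i - (if f i then 1 else -1)) by ring.
  exact: conv_abs.
have [p [[Ep p0] Hp]] := IH E' cE' H'.
exists p; split => // i; rewrite ltnS leq_eqVlt => /orP [/eqP ei|ilt]; last exact: Hp.
by have -> : i = ik by apply: val_inj.
Qed.

Lemma signA0 (E : set V) : cvx E ->
  (forall f, exists p, E p /\ forall i : 'I_n, `|p ord0 i - sgv f ord0 i| <= 2^-1) -> E 0.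
Proof.
move=> cE H; have [|p [Ep Hp]] := @signA n E cE.
  by move=> f; have [p [Ep Hp]] := H f; exists p; split => // i _; apply: Hp.
suff -> : (0 : V) = p by [].
apply/rowP => i; rewrite !mxE (Hp i) //.
Qed.

Lemma unif (I : finType) (P : I -> R -> Prop) :
  (forall i r r', P i r -> 0 < r' -> r' <= r -> P i r') ->
  (forall i, exists2 r, 0 < r & P i r) -> exists2 r, 0 < r & forall i, P i r.
Proof.
move=> Pd Pe.
suff H : forall s : seq I, exists2 r, 0 < r & forall i, i \in s -> P i r.
  by have [r r0 Hr] := H (enum I); exists r => // i; apply: Hr; rewrite mem_enum.
elim=> [|j s [r r0 Hr]]; first by exists 1.
have [r1 r10 Hr1] := Pe j.
exists (Num.min r r1); first by rewrite lt_min r0 r10.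
move=> i; rewrite inE => /orP [/eqP ->|iS].
  by apply: (Pd _ r1) => //; [rewrite lt_min r0 r10 | rewrite ge_min lexx orbT].
by apply: (Pd _ r); [apply: Hr | rewrite lt_min r0 r10 | rewrite ge_min lexx].
Qed.

Lemma ballV (x y : V) e : ball x e y -> forall i, `|x ord0 i - y ord0 i| < e.
Proof. by case=> _ H i; have := H ord0 i. Qed.

Lemma ballV' (x y : V) e : 0 < e -> (forall i, `|x ord0 i - y ord0 i| < e) -> ball x e y.
Proof. by move=> e0 H; split => // i j; rewrite (ord1 i); apply: H. Qed.

Lemma denseT (T : set V) : cvx T ->
  (forall (u : V) (e : R), 0 < e -> exists t : V, T t /\ forall i, `|t ord0 i - u ord0 i| < e) ->
  forall u, T u.
Proof.
move=> cT dT u.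
pose E := [set v : V | T (u + v)].
suff : E 0 by rewrite /E /= addr0.
apply: signA0.
  move=> a b l Ea Eb l0 l1; rewrite /E /=.
  have -> : u + (l *: a + (1 - l) *: b) = l *: (u + a) + (1 - l) *: (u + b).
    by apply/rowP => i; rewrite !mxE; ring.
  exact: cT.
move=> f; have [|t [Tt Ht]] := dT (u + sgv f) (2^-1); first by rewrite invr_gt0 ltr0n.
exists (t - u); split; first by rewrite /E /= addrC subrK.
move=> i; apply: ltW; have := Ht i; rewrite !mxE.
by rewrite opprD addrA.
Qed.

Lemma interior_of (D : set V) x : cvx D -> D x ->
  (forall f, exists2 r, 0 < r & D (x + r *: sgv f)) -> (interior D) x.
Proof.
move=> cD Dx H.
have Pd : forall f r1 r2, D (x + r1 *: sgv f) -> 0 < r2 -> r2 <= r1 -> D (x + r2 *: sgv f).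
  move=> f r1 r2 D1 r20 r21.
  have r10 : 0 < r1 by apply: (lt_le_trans r20).
  have -> : x + r2 *: sgv f = (r2 / r1) *: (x + r1 *: sgv f) + (1 - r2 / r1) *: x.
    apply/rowP => i; rewrite !mxE; field; exact: lt0r_neq0.
  apply: cD => //; first by rewrite divr_ge0 // ltW.
  by rewrite ler_pdivrMr // mul1r.
have [r r0 Hr] := @unif _ (fun f r => D (x + r *: sgv f)) Pd H.
rewrite /interior /=; apply/nbhs_ballP; exists (r / 2) => /=; first by rewrite divr_gt0.
move=> y /ballV Hy.
pose u := y - x.
pose E := [set v : V | D (x + u + r *: v)].
suff : E 0 by rewrite /E /= scaler0 addr0 /u addrC subrK.
apply: signA0.
  move=> a b l Ea Eb l0 l1; rewrite /E /=.
  have -> : x + u + r *: (l *: a + (1 - l) *: b) =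
      l *: (x + u + r *: a) + (1 - l) *: (x + u + r *: b).
    by apply/rowP => i; rewrite !mxE; ring.
  exact: cD.
move=> f; exists (sgv f - r^-1 *: u); split.
  rewrite /E /=.
  have -> : x + u + r *: (sgv f - r^-1 *: u) = x + r *: sgv f.
    apply/rowP => i; rewrite !mxE; field; exact: lt0r_neq0.
  exact: Hr.
move=> i; rewrite !mxE.
have abK : forall a b : R, a - b - a = - b by move=> a b; ring.
rewrite abK.
rewrite normrN normrM gtr0_norm ?invr_gt0 //.
rewrite ler_pdivrMl //.
by rewrite distrC; apply: ltW; apply: Hy.
Qed.

Lemma dotpBr (a b c : V) : dotp a (b - c) = dotp a b - dotp a c.
Proof. by rewrite /dotp -sumrB; apply: eq_bigr => i _; rewrite !mxE; ring. Qed.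

Lemma dotpZr (a b : V) s : dotp a (s *: b) = s * dotp a b.
Proof. by rewrite /dotp mulr_sumr; apply: eq_bigr => i _; rewrite !mxE; ring. Qed.

Lemma dotpZl (a b : V) s : dotp (s *: a) b = s * dotp a b.
Proof. by rewrite /dotp mulr_sumr; apply: eq_bigr => i _; rewrite !mxE; ring. Qed.

Lemma dotp_sq (w u : V) l :
  dotp (w - l *: u) (w - l *: u) = dotp w w - 2 * l * dotp w u + l ^+ 2 * dotp u u.
Proof.
rewrite /dotp !mulr_sumr -sumrB -big_split /=.
by apply: eq_bigr => i _; rewrite !mxE; ring.
Qed.

Lemma dotp_ge0 (u : V) : 0 <= dotp u u.
Proof. by rewrite /dotp; apply: sumr_ge0 => i _; rewrite -expr2 sqr_ge0. Qed.

Lemma dotp_coord (u : V) i : u ord0 i * u ord0 i <= dotp u u.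
Proof.
rewrite /dotp (bigD1 i) //= lerDl; apply: sumr_ge0 => j _; by rewrite -expr2 sqr_ge0.
Qed.

Lemma closure_cvx (T : set V) p t l : cvx T -> closure T p -> T t -> 0 <= l -> l <= 1 ->
  closure T (p + l *: (t - p)).
Proof.
move=> cT cp Tt l0 l1 B /nbhs_ballP [e /= e0 HB].
have [p' [Tp' bp']] : T `&` ball p e !=set0 by apply: cp; apply: nbhsx_ballx.
exists (l *: t + (1 - l) *: p'); split; first exact: cT.
apply: HB; apply: ballV' => // i.
have := @ballV _ _ _ bp' i; rewrite !mxE => h.
have -> : p ord0 i + l * (t ord0 i - p ord0 i) - (l * t ord0 i + (1 - l) * p' ord0 i)
   = (1 - l) * (p ord0 i - p' ord0 i) by ring.
rewrite normrM ger0_norm ?subr_ge0 //; apply: le_lt_trans h.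
by rewrite ler_piMl // ?normr_ge0 // lerBlDr lerDl.
Qed.

Lemma cont_sum (s : seq 'I_n) (g : 'I_n -> V -> R) : (forall i, continuous (g i)) ->
  continuous (fun v => \sum_(i <- s) g i v).
Proof.
move=> gc; elim: s => [|j s IH].
  have -> : (fun v : V => \sum_(i <- [::]) g i v) = fun=> 0.
    by apply: funext => v; rewrite big_nil.
  exact: cst_continuous.
have -> : (fun v : V => \sum_(i <- j :: s) g i v) = g j + (fun v => \sum_(i <- s) g i v).
  by apply: funext => v; rewrite big_cons.
by move=> v; apply: continuousD; [exact: gc | exact: IH].
Qed.

Lemma abs_le_sq (a : R) : `|a| <= 1 + a * a.
Proof.
have hn : `|a| * `|a| = a * a by rewrite -normrM ger0_norm // -expr2 sqr_ge0.
have := normr_ge0 a; nra.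
Qed.

Lemma sep (T : set V) (z : V) (e : R) : cvx T -> T 0 ->
  (forall t s, T t -> 0 < s -> T (s *: t)) -> 0 < e ->
  (forall t, T t -> exists i, e <= `|t ord0 i - z ord0 i|) ->
  exists g : V, g != 0 /\ forall t, T t -> dotp g t <= 0.
Proof.
move=> cT T0 Tc e0 Tf.
pose f (v : V) := dotp (z - v) (z - v).
pose M := \sum_i `|z ord0 i| + 1 + f 0.
have boxf : forall v, f v <= f 0 -> forall i, `|v ord0 i| <= M.
  move=> v hv i.
  have h1 : `|z ord0 i - v ord0 i| <= 1 + f v.
    have := dotp_coord (z - v) i; rewrite !mxE => h.
    have := abs_le_sq (z ord0 i - v ord0 i); rewrite /f; lra.
  have h2 : `|z ord0 i| <= \sum_j `|z ord0 j|.
    by rewrite (bigD1 i) //= lerDl; apply: sumr_ge0.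
  have h3 : `|v ord0 i| <= `|z ord0 i| + `|z ord0 i - v ord0 i|.
    have {1}-> : v ord0 i = z ord0 i - (z ord0 i - v ord0 i) by ring.
    exact: ler_normB.
  rewrite /M; lra.
pose box := [set v : V | forall i, `[-M, M]%classic (v ord0 i)].
have cbox : compact box.
  exact: (@rV_compact _ _ (fun _ => `[-M, M]%classic) (fun _ => @segment_compact _ (-M) M)).
pose K := box `&` closure T.
have cK : compact K := compact_closedI cbox (@closed_closure _ T).
have M0 : 0 <= M.
  rewrite /M; apply: addr_ge0; last exact: dotp_ge0.
  by apply: addr_ge0 => //; apply: sumr_ge0.
have inbox : forall v, f v <= f 0 -> box v.
  move=> v /boxf h i /=; rewrite in_itv /= -ler_norml; exact: h.
have K0 : K 0 by split; [exact: inbox | exact: subset_closure].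
have fc : continuous f.
  have -> : f = fun v => \sum_(i <- index_enum 'I_n) (fun i v => (z ord0 i - v ord0 i) * (z ord0 i - v ord0 i)) i v.
    by apply: funext => v; rewrite /f /dotp; apply: eq_bigr => i _; rewrite !mxE.
  apply: cont_sum => i v /=.
  have hB : {for v, continuous (fun w : V => z ord0 i - w ord0 i)}.
    have h1 : {for v, continuous (fun w : V => w ord0 i)} by apply: coord_continuous.
    have h2 : {for v, continuous (fun w : V => z ord0 i)} by apply: cst_continuous.
    exact: continuousB h2 h1.
  exact: (@continuousM _ _ (fun w : V => z ord0 i - w ord0 i) (fun w : V => z ord0 i - w ord0 i) v hB hB).
have [p Kp pmin] := @EVT_min_rV R n f K (ex_intro _ 0 K0) cK (continuous_subspaceT fc).
move: Kp; rewrite inE => -[boxp clp].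
have fp0 : f p <= f 0 by apply: pmin; rewrite inE.
have key : forall t, T t -> dotp (z - p) (t - p) <= 0.
  move=> t Tt; rewrite leNgt; apply/negP => c0.
  set c := dotp (z - p) (t - p) in c0 *; set d := dotp (t - p) (t - p).
  have d0 : 0 <= d by apply: dotp_ge0.
  have cd0 : 0 < c + d by rewrite (lt_le_trans c0) // lerDl.
  pose l := c / (c + d).
  have l0 : 0 < l by apply: divr_gt0.
  have l1 : l <= 1 by rewrite ler_pdivrMr // mul1r lerDl.
  have ld : l * d <= c.
    rewrite /l mulrAC ler_pdivrMr //; nra.
  pose q := p + l *: (t - p).
  have fq : f q = f p - 2 * l * c + l ^+ 2 * d.
    rewrite /f; have -> : z - q = (z - p) - l *: (t - p) by rewrite /q opprD addrA.
    exact: dotp_sq.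
  have h : l ^+ 2 * d <= l * c by rewrite expr2 -mulrA ler_wpM2l // ltW.
  have lc : 0 < l * c by apply: mulr_gt0.
  have fqlt : f q < f p by rewrite fq; lra.
  have Kq : K q.
    split; first by apply: inbox; lra.
    exact: closure_cvx (ltW l0) l1.
  have := pmin q (mem_set Kq); rewrite leNgt fqlt; done.
exists (z - p); split.
  apply/eqP => /subr0_eq zp.
  have [t [Tt bt]] := clp _ (nbhsx_ballx p e e0).
  have [i hi] := Tf t Tt.
  have := @ballV _ _ _ bt i; rewrite -zp distrC ltNge hi; done.
move=> t Tt; rewrite leNgt; apply/negP => g0.
set g := z - p in g0 key *.
set a := dotp g p.
pose s := (`|a| + 1) / dotp g t.
have s0 : 0 < s by apply: divr_gt0 => //; rewrite ltr_pwDr // normr_ge0.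
have := key (s *: t) (Tc t s Tt s0); rewrite dotpBr dotpZr -/a.
have -> : s * dotp g t = `|a| + 1 by rewrite /s mulrAC -mulrA divff ?mulr1 // gt_eqF.
have := ler_norm a; lra.
Qed.
End S.

Unset Implicit Arguments.
Set Strict Implicit.

Theorem theorem2 (R : realType) (n : nat) (S C : set 'rV[R]_n)
    (Gamma : set ('rV[R]_n * R)) :
  closed S ->
  S_free S C ->
  C = [set x | forall ab, Gamma ab -> dotp ab.1 x <= ab.2] ->
  (forall ab, Gamma ab -> exists x, [/\ S x, C x & exposes C x ab]) ->
  maximal_S_free S C.
Proof.
move=> _ SC HC HG; split => // D [cD hD] CD.
apply/seteqP; split => // y Dy; apply: contrapT => nCy.
have : ~ (forall ab, Gamma ab -> dotp ab.1 y <= ab.2).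
  by move=> h; apply: nCy; rewrite HC.
move=> /existsNP [ab hab].
have Gab : Gamma ab by apply: contrapT => nG; apply: hab => /nG.
have hy : ab.2 < dotp ab.1 y.
  by rewrite ltNge; apply/negP => h; apply: hab => _.
have [x [Sx Cx [vab [tab exab]]]] := HG ab Gab.
have Dx := CD x Cx.
have cvxD : cvx D by move=> a b l Da Db l0 l1; exact: convexRP cD a b l Da Db l0 l1.
have nint : ~ (interior D) x.
  by move=> ix; suff : (interior D `&` S) x by rewrite hD.
pose T := [set v : 'rV[R]_n | exists t d, 0 < t /\ D d /\ v = t *: (d - x)].
have cvxT : cvx T.
  move=> a b l [t1 [d1 [t10 [Dd1 ->]]]] [t2 [d2 [t20 [Dd2 ->]]]] l0 l1.
  pose s := l * t1 + (1 - l) * t2.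
  have s0 : 0 < s by rewrite /s; nra.
  pose mu := l * t1 / s.
  exists s, (mu *: d1 + (1 - mu) *: d2); split => //; split.
    apply: cvxD => //; first by rewrite /mu; apply: divr_ge0; [apply: mulr_ge0 => //; exact: ltW | exact: ltW].
    by rewrite /mu ler_pdivrMr // mul1r /s lerDl mulr_ge0 // ?subr_ge0 // ltW.
  apply/rowP => i; rewrite !mxE /mu /s; field.
  by rewrite -/s lt0r_neq0.
have T0 : T 0 by exists 1, x; rewrite subrr scaler0.
have Tc : forall t s, T t -> 0 < s -> T (s *: t).
  move=> _ s [t [d [t0 [Dd ->]]]] s0; exists (s * t), d; split; first exact: mulr_gt0.
  by rewrite scalerA.
case: (pselect (forall (u : 'rV[R]_n) (e : R), 0 < e ->
   exists t : 'rV[R]_n, T t /\ forall i, `|t ord0 i - u ord0 i| < e)) => [dense|ndense].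
  apply: nint; apply: interior_of cvxD Dx _ => f.
  have [t [d [t0 [Dd eq]]]] := denseT cvxT dense (@sgv R n f).
  exists t^-1; first by rewrite invr_gt0.
  suff -> : x + t^-1 *: @sgv R n f = d by [].
  rewrite eq; apply/rowP => i; rewrite !mxE; field; exact: lt0r_neq0.
move: ndense => /existsNP [u /existsNP [e he]].
have e0 : 0 < e by apply: contrapT => ne; apply: he => /ne.
have far : forall t, T t -> exists i, e <= `|t ord0 i - u ord0 i|.
  move=> t Tt; apply: contrapT => nt; apply: he => _; exists t; split => // i.
  by rewrite ltNge; apply/negP => h; apply: nt; exists i.
have [g [g0 hg]] := sep cvxT T0 Tc e0 far.
have valg : forall d, D d -> dotp g d <= dotp g x.
  move=> d Dd; have := hg (1 *: (d - x)) _.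
  rewrite scale1r dotpBr subr_le0; apply.
  by exists 1, d; rewrite scale1r.
have [mu mu0 [/= gmu bmu]] := exab (g, dotp g x) g0 (fun w Cw => valg w (CD w Cw)) erefl.
have := valg y Dy; rewrite bmu gmu dotpZl ler_pM2l // leNgt hy.
Qed.
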